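(* Let $d\geq 2$, let $\rho^s$ be a state on $H_d=\mathbb{C}^d$, and let $A$ and $B$ be auxiliary qudits ($d$-dimensional systems) each prepared in $|0\rangle\langle 0|$. Then there exists an incoherent operation $\Lambda$ on $H_d\otimes H_d\otimes H_d$ such that $\Lambda(\rho^s\otimes|0\rangle\langle 0|^A\otimes|0\rangle\langle 0|^B)$ is genuinely tripartite entangled if and only if $\rho^s$ is coherent.
   Context: Coherence is with respect to the computational basis of $H_d$ and the product computational basis of $H_d^{\otimes 3}$; a state is incoherent if it is diagonal in this basis and coherent otherwise. An incoherent operation is a completely positive trace-preserving map $\Lambda(\rho)=\sum_j K_j\rho K_j^\dagger$ whose Kraus operators map incoherent states to (unnormalized) incoherent states. A pure tripartite state is biseparable if it is a product state with respect to some bipartition of the three parties into two nonempty groups; a tripartite mixed state is genuinely tripartite entangled if it cannot be written as a convex combination of biseparable pure states (possibly with respect to different bipartitions). *)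

(* Defs.v *)
From HB Require Import structures.
From mathcomp Require Import all_boot all_order all_algebra.
From mathcomp Require Import mxtens.
Set Implicit Arguments. Unset Strict Implicit. Unset Printing Implicit Defensive.
Import Order.TTheory GRing.Theory Num.Theory.
Local Open Scope ring_scope.

Section Quantum.
Variable C : numClosedFieldType.

Definition adjmx m n (A : 'M[C]_(m, n)) : 'M[C]_(n, m) :=
  (map_mx Num.conj A)^T.

Definition density n (rho : 'M[C]_n) : Prop :=
  [/\ adjmx rho = rho,
      (forall v : 'cV[C]_n, 0 <= (adjmx v *m rho *m v) 0 0)
    & \tr rho = 1].

Definition incoherent_state n (rho : 'M[C]_n) : Prop :=
  density rho /\ is_diag_mx rho.

Definition coherent n (rho : 'M[C]_n) : Prop :=
  density rho /\ ~ incoherent_state rho.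

Definition kraus_apply n k (K : 'I_k -> 'M[C]_n) (rho : 'M[C]_n) : 'M[C]_n :=
  \sum_(j < k) K j *m rho *m adjmx (K j).

Definition incoherent_op n k (K : 'I_k -> 'M[C]_n) : Prop :=
  (\sum_(j < k) adjmx (K j) *m K j = 1%:M) /\
  (forall (j : 'I_k) (delta : 'M[C]_n), incoherent_state delta ->
      is_diag_mx (K j *m delta *m adjmx (K j))).

Definition proj0 d : 'M[C]_d :=
  \matrix_(i, j) ((nat_of_ord i == 0%N) && (nat_of_ord j == 0%N))%:R.

(* index of the product basis vector |i>|j>|k> in H_d (x) H_d (x) H_d,
   consistent with the Kronecker product (A *t B) *t C of mxtens *)
Definition idx3 d (i j k : 'I_d) : 'I_(d * d * d) :=
  mxtens_index (mxtens_index (i, j), k).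

Definition product_A_BC d (psi : 'cV[C]_(d * d * d)) : Prop :=
  exists (u : 'cV[C]_d) (phi : 'cV[C]_(d * d)),
    forall i j k, psi (idx3 i j k) 0 = u i 0 * phi (mxtens_index (j, k)) 0.
Definition product_B_AC d (psi : 'cV[C]_(d * d * d)) : Prop :=
  exists (u : 'cV[C]_d) (phi : 'cV[C]_(d * d)),
    forall i j k, psi (idx3 i j k) 0 = u j 0 * phi (mxtens_index (i, k)) 0.
Definition product_C_AB d (psi : 'cV[C]_(d * d * d)) : Prop :=
  exists (u : 'cV[C]_d) (phi : 'cV[C]_(d * d)),
    forall i j k, psi (idx3 i j k) 0 = u k 0 * phi (mxtens_index (i, j)) 0.

Definition biseparable_pure d (psi : 'cV[C]_(d * d * d)) : Prop :=
  adjmx psi *m psi = 1%:M /\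
  [\/ product_A_BC psi, product_B_AC psi | product_C_AB psi].

Definition gme d (rho : 'M[C]_(d * d * d)) : Prop :=
  density rho /\
  ~ exists (m : nat) (p : 'I_m -> C) (psi : 'I_m -> 'cV[C]_(d * d * d)),
      [/\ forall l, 0 <= p l,
          \sum_(l < m) p l = 1,
          forall l, biseparable_pure (psi l)
        & rho = \sum_(l < m) p l *: (psi l *m adjmx (psi l))].

End Quantum.

(* Main.v *)
Require Import Defs.
From HB Require Import structures.
From mathcomp Require Import all_boot all_order all_algebra.
From mathcomp Require Import mxtens.
Set Implicit Arguments. Unset Strict Implicit. Unset Printing Implicit Defensive.
Import Order.TTheory GRing.Theory Num.Theory.
Local Open Scope ring_scope.

Section Aux.
Variable C : numClosedFieldType.

Lemma adjmxE m n (A : 'M[C]_(m, n)) i j : adjmx A i j = (A j i)^*.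
Proof. by rewrite /adjmx !mxE. Qed.

Lemma adjmxM m n p (A : 'M[C]_(m, n)) (B : 'M[C]_(n, p)) :
  adjmx (A *m B) = adjmx B *m adjmx A.
Proof.
apply/matrixP=> i j; rewrite !mxE; rewrite rmorph_sum; apply: eq_bigr => k _.
by rewrite !adjmxE rmorphM mulrC.
Qed.

Lemma adjmxK m n (A : 'M[C]_(m, n)) : adjmx (adjmx A) = A.
Proof. by apply/matrixP=> i j; rewrite !adjmxE conjCK. Qed.

Definition Emb N d (f : 'I_d -> 'I_N) : 'M[C]_(N, d) :=
  \matrix_(x, a) (x == f a)%:R.

Lemma adjEmbE N d (f : 'I_d -> 'I_N) a x : adjmx (Emb f) a x = (x == f a)%:R.
Proof. by rewrite adjmxE mxE conjC_nat. Qed.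

Lemma mulEmb_img N d p (f : 'I_d -> 'I_N) (M : 'M[C]_(d, p)) a c :
  injective f -> (Emb f *m M) (f a) c = M a c.
Proof.
move=> fi; rewrite mxE (bigD1 a) //= big1 ?addr0 ?mxE ?eqxx ?mul1r //.
by move=> b nb; rewrite mxE (inj_eq fi) eq_sym (negbTE nb) mul0r.
Qed.

Lemma mulEmb_out N d p (f : 'I_d -> 'I_N) (M : 'M[C]_(d, p)) x c :
  (forall a, x != f a) -> (Emb f *m M) x c = 0.
Proof.
move=> h; rewrite mxE big1 // => b _; by rewrite mxE (negbTE (h b)) mul0r.
Qed.

Lemma mulEmbA_img N d p (f : 'I_d -> 'I_N) (M : 'M[C]_(p, d)) a c :
  injective f -> (M *m adjmx (Emb f)) c (f a) = M c a.
Proof.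
move=> fi; rewrite mxE (bigD1 a) //= big1 ?addr0 ?adjEmbE ?eqxx ?mulr1 //.
by move=> b nb; rewrite adjEmbE (inj_eq fi) eq_sym (negbTE nb) mulr0.
Qed.

Lemma mulEmbA_out N d p (f : 'I_d -> 'I_N) (M : 'M[C]_(p, d)) x c :
  (forall a, x != f a) -> (M *m adjmx (Emb f)) c x = 0.
Proof.
move=> h; rewrite mxE big1 // => b _; by rewrite adjEmbE (negbTE (h b)) mulr0.
Qed.

Lemma adjEmb_mul N d p (f : 'I_d -> 'I_N) (M : 'M[C]_(N, p)) a c :
  (adjmx (Emb f) *m M) a c = M (f a) c.
Proof.
rewrite mxE (bigD1 (f a)) //= big1 ?addr0 ?adjEmbE ?eqxx ?mul1r //.
by move=> b nb; rewrite adjEmbE (negbTE nb) mul0r.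
Qed.

Lemma mul_Emb N d p (f : 'I_d -> 'I_N) (M : 'M[C]_(p, N)) c a :
  (M *m Emb f) c a = M c (f a).
Proof.
rewrite mxE (bigD1 (f a)) //= big1 ?addr0 ?mxE ?eqxx ?mulr1 //.
by move=> b nb; rewrite mxE (negbTE nb) mulr0.
Qed.

Lemma EmbtE N d (f : 'I_d -> 'I_N) : injective f ->
  adjmx (Emb f) *m Emb f = 1%:M.
Proof.
move=> fi; apply/matrixP=> a b; rewrite adjEmb_mul !mxE (inj_eq fi).
by rewrite eq_sym.
Qed.

Lemma emb_img N d (f : 'I_d -> 'I_N) (M : 'M[C]_d) a b : injective f ->
  (Emb f *m M *m adjmx (Emb f)) (f a) (f b) = M a b.
Proof. by move=> fi; rewrite mulEmbA_img // mulEmb_img. Qed.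

Lemma emb_outl N d (f : 'I_d -> 'I_N) (M : 'M[C]_d) x y :
  (forall a, x != f a) -> (Emb f *m M *m adjmx (Emb f)) x y = 0.
Proof.
move=> h; rewrite mxE big1 // => b _; by rewrite mulEmb_out // mul0r.
Qed.

Lemma emb_outr N d (f : 'I_d -> 'I_N) (M : 'M[C]_d) x y :
  (forall a, y != f a) -> (Emb f *m M *m adjmx (Emb f)) x y = 0.
Proof. by move=> h; rewrite mulEmbA_out. Qed.

Lemma emb_diag N d (f : 'I_d -> 'I_N) (M : 'M[C]_d) : injective f ->
  is_diag_mx M -> is_diag_mx (Emb f *m M *m adjmx (Emb f)).
Proof.
move=> fi /is_diag_mxP dM; apply/is_diag_mxP => x y.
case: (pickP (fun a => x == f a)) => [a /eqP ->|hx]; last first.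
  by rewrite emb_outl // => a; rewrite hx.
case: (pickP (fun b => y == f b)) => [b /eqP ->|hy]; last first.
  by rewrite emb_outr // => b; rewrite hy.
move=> nxy; rewrite emb_img // dM //; apply: contra nxy => /eqP/val_inj ab.
by rewrite ab.
Qed.

Lemma density_emb N d (f : 'I_d -> 'I_N) (M : 'M[C]_d) : injective f ->
  density M -> density (Emb f *m M *m adjmx (Emb f)).
Proof.
move=> fi [hM pM tM]; split.
- by rewrite !adjmxM adjmxK hM mulmxA.
- move=> v.
  have -> : adjmx v *m (Emb f *m M *m adjmx (Emb f)) *m v =
     adjmx (adjmx (Emb f) *m v) *m M *m (adjmx (Emb f) *m v).
    by rewrite adjmxM adjmxK !mulmxA.
  exact: pM.
- by rewrite mxtrace_mulC mulmxA EmbtE // mul1mx.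
Qed.

Lemma idx3_eq d (i j k i' j' k' : 'I_d) :
  (idx3 i j k == idx3 i' j' k') = [&& i == i', j == j' & k == k'].
Proof.
by rewrite /idx3 (can_eq (@mxtens_indexK _ _)) xpair_eqE
  (can_eq (@mxtens_indexK _ _)) xpair_eqE andbA.
Qed.

Lemma idx3P d (x : 'I_(d * d * d)) : exists i j k, x = idx3 i j k.
Proof.
case: (mxtens_indexP x) => ij k; case: (mxtens_indexP ij) => i j.
by exists i, j, k.
Qed.

Lemma mix_entry N m (p : 'I_m -> C) (psi : 'I_m -> 'cV[C]_N) x y :
  (\sum_(l < m) p l *: (psi l *m adjmx (psi l))) x y =
  \sum_(l < m) p l * (psi l x 0 * (psi l y 0)^*).
Proof.
rewrite summxE; apply: eq_bigr => l _; by rewrite !mxE big_ord1 adjmxE.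
Qed.

Lemma diag_sum N k (F : 'I_k -> 'M[C]_N) :
  (forall j, is_diag_mx (F j)) -> is_diag_mx (\sum_(j < k) F j).
Proof.
move=> h; apply/is_diag_mxP => x y nxy; rewrite summxE big1 // => j _.
by move/is_diag_mxP: (h j) => -> .
Qed.

Lemma inj1 N (l : 'I_N) : injective (fun _ : 'I_1 => l).
Proof. by move=> a b _; rewrite (ord1 a) (ord1 b). Qed.

Lemma diag_decomp d (S : 'M[C]_(d * d * d)) : density S -> is_diag_mx S ->
  exists (m : nat) (p : 'I_m -> C) (psi : 'I_m -> 'cV[C]_(d * d * d)),
      [/\ forall l, 0 <= p l,
          \sum_(l < m) p l = 1,
          forall l, biseparable_pure (psi l)
        & S = \sum_(l < m) p l *: (psi l *m adjmx (psi l))].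
Proof.
move=> [hS pS tS] /is_diag_mxP dS.
exists (d * d * d)%N, (fun l => S l l), (fun l => Emb (fun _ : 'I_1 => l)).
split.
- move=> l; have := pS (Emb (fun _ : 'I_1 => l)).
  by rewrite mul_Emb adjEmb_mul.
- by rewrite -tS.
- move=> l; split; first by apply: EmbtE; apply: inj1.
  have [i0 [j0 [k0 ->]]] := idx3P l.
  constructor 1; exists (Emb (fun _ : 'I_1 => i0)),
    (Emb (fun _ : 'I_1 => mxtens_index (j0, k0))) => i j k.
  rewrite !mxE idx3_eq (can_eq (@mxtens_indexK _ _)) xpair_eqE.
  by rewrite -natrM mulnb.
- apply/matrixP => x y; rewrite mix_entry (bigD1 x) //= big1 ?addr0.
    rewrite !mxE ?eq_refl ?mul1r conjC_nat.
    case: eqP => [->|nyx]; first by rewrite mulr1.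
    rewrite mulr0 dS //; apply/eqP => /val_inj e; by apply: nyx.
  move=> l nl; rewrite !mxE; case: eqP => [e|_]; last by rewrite mul0r mulr0.
  by move: nl; rewrite e eq_refl.
Qed.
End Aux.
Arguments Emb {C N d}.

Theorem theorem4 (C : numClosedFieldType) (d : nat) (hd : (2 <= d)%N)
    (rho : 'M[C]_d) :
  density rho ->
  ((exists (k : nat) (K : 'I_k -> 'M[C]_(d * d * d)),
      incoherent_op K /\ gme (kraus_apply K (rho *t proj0 C d *t proj0 C d)))
   <-> coherent rho).
Proof.
move=> dR; case: d hd rho dR => [|[|n]] // _ rho dR.
set P := proj0 C n.+2.
pose f0 := fun a : 'I_n.+2 => idx3 a 0 0.
have f0i : injective f0.
  by move=> a b /eqP; rewrite /f0 idx3_eq => /and3P[/eqP ->].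
have tens : rho *t P *t P = Emb f0 *m rho *m adjmx (Emb f0).
  apply/matrixP => x y.
  have [i [j [k ->]]] := idx3P x; have [i' [j' [k' ->]]] := idx3P y.
  rewrite /idx3 !tensmxE -!/(idx3 _ _ _) /P [proj0 _ _ _ _]mxE [proj0 _ _ _ _]mxE.
  have [/andP[/eqP j0 /eqP k0]|njk] := boolP ((j == 0%N :> nat) && (k == 0%N :> nat)).
    have -> : j = 0 by apply: val_inj; rewrite /= j0.
    have -> : k = 0 by apply: val_inj; rewrite /= k0.
    have [/andP[/eqP j0' /eqP k0']|njk'] := boolP ((j' == 0%N :> nat) && (k' == 0%N :> nat)).
      have -> : j' = 0 by apply: val_inj; rewrite /= j0'.
      have -> : k' = 0 by apply: val_inj; rewrite /= k0'.
      by rewrite (emb_img _ _ _ f0i) /= mulr1 mulr1.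
    rewrite emb_outr; last by move=> a; rewrite idx3_eq; apply: contra njk' => /and3P[_ /eqP -> /eqP ->].
    by move: njk'; rewrite negb_and => /orP[]/negbTE->; rewrite ?andbF ?mulr0 ?mul0r.
  rewrite emb_outl; last by move=> a; rewrite idx3_eq; apply: contra njk => /and3P[_ /eqP -> /eqP ->].
  by move: njk; rewrite negb_and => /orP[]/negbTE->; rewrite ?andbF ?mulr0 ?mul0r.
split.
  move=> [k [K [[_ Kd] [dS nodec]]]]; split => // -[_ rdiag].
  apply: nodec; apply: diag_decomp => //.
  rewrite /kraus_apply; apply: diag_sum => j; apply: Kd.
  rewrite tens; split; first exact: density_emb.
  exact: emb_diag.
move=> [_ ncoh].
have ndiag : ~~ is_diag_mx rho by apply/negP => h; apply: ncoh.
move: ndiag; rewrite negb_forall => /existsP [a]; rewrite negb_forall => /existsP [b].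
rewrite negb_imply => /andP [nab rab].
pose g := fun x : 'I_(n.+2 * n.+2 * n.+2) =>
  idx3 (mxtens_unindex (mxtens_unindex x).1).1
    ((mxtens_unindex (mxtens_unindex x).1).1 + (mxtens_unindex (mxtens_unindex x).1).2)
    ((mxtens_unindex (mxtens_unindex x).1).1 + (mxtens_unindex x).2).
have gE i j k : g (idx3 i j k) = idx3 i (i + j) (i + k).
  by rewrite /g /idx3 !mxtens_indexK.
have gi : injective g.
  move=> x y; have [i [j [k ->]]] := idx3P x; have [i' [j' [k' ->]]] := idx3P y.
  rewrite !gE => /eqP; rewrite !idx3_eq => /and3P[/eqP ei /eqP ej /eqP ek].
  by subst i'; move/addrI: ej => ->; move/addrI: ek => ->.
pose f1 := fun a : 'I_n.+2 => idx3 a a a.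
have f1i : injective f1.
  by move=> x y /eqP; rewrite /f1 idx3_eq => /and3P[/eqP ->].
have UE : Emb g *m Emb f0 = Emb f1 :> 'M[C]__.
  by apply/matrixP => x c; rewrite mul_Emb !mxE /f0 gE !addr0.
have sigE : kraus_apply (fun _ : 'I_1 => Emb g) (rho *t P *t P) =
    Emb f1 *m rho *m adjmx (Emb f1).
  by rewrite /kraus_apply big_ord1 tens -UE adjmxM !mulmxA.
exists 1%N, (fun _ => Emb g); split.
  split; first by rewrite big_ord1 EmbtE.
  by move=> j delta [_ dd]; apply: emb_diag.
rewrite sigE; split; first exact: density_emb.
move=> [m [p [psi [p0 p1 bis eq]]]].
have ab : a != b :> 'I_n.+2 by apply: contra nab => /eqP ->.
have vanish l x : (forall c, x != f1 c) -> p l = 0 \/ psi l x 0 = 0.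
  move=> hx.
  have s0 : \sum_(l < m) p l * (psi l x 0 * (psi l x 0)^*) = 0.
    by rewrite -mix_entry -eq emb_outl.
  have := psumr_eq0P _ s0 (isT : xpredT l).
  have nn : forall i : 'I_m, true -> 0 <= p i * (psi i x 0 * (psi i x 0)^*).
    by move=> i _; rewrite -normCK mulr_ge0 // exprn_ge0.
  move=> /(_ nn) /eqP; rewrite -normCK mulf_eq0 => /orP[/eqP|]; first by left.
  by rewrite sqrf_eq0 normr_eq0 => /eqP; right.
have notf1 (i j k : 'I_n.+2) : i != j -> forall c, idx3 i j k != f1 c.
  move=> nij c; rewrite /f1 idx3_eq; apply: contra nij => /and3P[/eqP -> /eqP -> _].
  by [].
have key l : p l * (psi l (f1 a) 0 * (psi l (f1 b) 0)^*) = 0.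
  have [->|pn] := eqVneq (p l) 0; first by rewrite mul0r.
  have van x : (forall c, x != f1 c) -> psi l x 0 = 0.
    by move=> hx; case: (vanish l x hx) => // pz; move: pn; rewrite pz eqxx.
  suff : psi l (f1 a) 0 * psi l (f1 b) 0 = 0.
    by move/eqP; rewrite mulf_eq0 => /orP[]/eqP->; rewrite ?mul0r ?conjC0 ?mulr0.
  case: (bis l) => _ [[u [phi H]]|[u [phi H]]|[u [phi H]]].
  - have := H a b b; rewrite van; last exact: notf1.
    move=> h0; rewrite /f1 !H [u b 0 * _]mulrC mulrACA -h0 mul0r //.
  - have := H b a b; rewrite van; last by apply: notf1; move: ab; rewrite eq_sym.
    move=> h0; rewrite /f1 !H [u b 0 * _]mulrC mulrACA -h0 mul0r //.
  - have := H a a b; rewrite van; last first.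
      move=> c; rewrite /f1 idx3_eq; apply: contra ab => /and3P[_ /eqP -> /eqP ->].
      by [].
    move=> h0; rewrite /f1 !H (mulrC (u a 0)) mulrACA [_ * u b 0]mulrC -h0 mul0r //.
have := emb_img rho a b f1i; rewrite eq mix_entry big1 // => e.
by move: rab; rewrite -e eqxx.
Qed.
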